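(* Let $\kappa$ be a regular cardinal, $A,B$ $\kappa$-additive complete atomic modal algebras and $f:A\to B$ a homomorphism of complete modal algebras. Then the map $F(f):\mathrm{At}(B)\to\mathrm{At}(A)$, $F(f)(b)=f_*(b)$, is a homomorphism of multi-relational Kripke frames from $F(B)$ to $F(A)$.
   Context: A modal algebra is a Boolean algebra $A$ with a unary operation $\Diamond$ satisfying $\Diamond 0=0$ and $\Diamond(x\vee y)=\Diamond x\vee\Diamond y$; it is complete if the Boolean reduct is complete, atomic if every non-zero element is the join of the atoms below it; $\mathrm{At}(A)$ is its set of atoms. It is $\kappa$-additive if $\Diamond\bigvee X=\bigvee_{x\in X}\Diamond x$ for all $X\subseteq A$ with $|X|<\kappa$. A homomorphism of complete modal algebras is a Boolean homomorphism preserving all joins and meets and commuting with $\Diamond$. For such $f:A\to B$, $f_{*}(b)=\bigwedge\{x\in A\mid b\leq f(x)\}$; it maps atoms to atoms. For $X\subseteq A$, $R(X)$ is the relation on $\mathrm{At}(A)$ with $a\,R(X)\,c\iff a\leq\bigwedge\{\Diamond x\mid x\in X,\ c\leq x\}$ (empty meet $=1$), and $F(A)=\langle\mathrm{At}(A),\{R(X)\mid X\subseteq A,|X|<\kappa\}\rangle$. A homomorphism of multi-relational Kripke frames $g:\langle W_1,S_1\rangle\to\langle W_2,S_2\rangle$ is a map $g:W_1\to W_2$ such that: (i) for every $x\in W_1$ and $R_2\in S_2$ there is $R_1\in S_1$ such that for all $y\in W_1$, $xR_1y$ implies $g(x)R_2g(y)$; (ii) for every $x\in W_1$ and $R_1\in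 S_1$ there is $R_2\in S_2$ such that for all $u\in W_2$, if $g(x)R_2u$ then there exists $y\in W_1$ with $xR_1y$ and $g(y)=u$. *)

(* Defs.v *)
Set Implicit Arguments.

Definition injective {T U : Type} (f : T -> U) := forall x y, f x = f y -> x = y.
Definition card_le (T U : Type) : Prop := exists f : T -> U, injective f.
Definition card_lt (T U : Type) : Prop := card_le T U /\ ~ card_le U T.

(* A cardinal kappa is represented by a type K of cardinality kappa.
   K is a regular cardinal: infinite, and a union (disjoint sum) of fewer
   than kappa sets each of size < kappa has size < kappa. *)
Definition regular_cardinal (K : Type) : Prop :=
  card_le nat K /\
  (forall (I : Type) (S : I -> Type),
      card_lt I K -> (forall i, card_lt (S i) K) -> card_lt {i : I & S i} K).

Definition small {T : Type} (K : Type) (X : T -> Prop) : Prop :=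
  card_lt {x : T | X x} K.

Record cba := CBA {
  car :> Type;
  le : car -> car -> Prop;
  sup : (car -> Prop) -> car;
  compl : car -> car;
  le_refl : forall x, le x x;
  le_antisym : forall x y, le x y -> le y x -> x = y;
  le_trans : forall x y z, le x y -> le y z -> le x z;
  sup_ub : forall (X : car -> Prop) x, X x -> le x (sup X);
  sup_least : forall (X : car -> Prop) z, (forall x, X x -> le x z) -> le (sup X) z;
  (* distributivity and complementation (stated via derived operations below) *)
  distr : forall x y z,
    sup (fun w => forall v, (v = x \/ v = sup (fun u => u = y \/ u = z)) -> le w v)
    = sup (fun u => u = sup (fun w => forall v, (v = x \/ v = y) -> le w v)
                 \/ u = sup (fun w => forall v, (v = x \/ v = z) -> le w v));
  compl_meet : forall x,
    sup (fun w => forall v, (v = x \/ v = compl x) -> le w v) = sup (fun _ => False);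
  compl_join : forall x,
    sup (fun u => u = x \/ u = compl x) = sup (fun _ => True)
}.

Arguments le {c} _ _.
Arguments sup {c} _.
Arguments compl {c} _.

Definition inf {A : cba} (X : A -> Prop) : A := sup (fun w => forall v, X v -> le w v).
Definition join {A : cba} (x y : A) : A := sup (fun u => u = x \/ u = y).
Definition meet {A : cba} (x y : A) : A := inf (fun u => u = x \/ u = y).
Definition bot {A : cba} : A := sup (fun _ => False).
Definition top {A : cba} : A := sup (fun _ => True).

Definition image {T U : Type} (f : T -> U) (X : T -> Prop) : U -> Prop :=
  fun y => exists x, X x /\ y = f x.

Record cma := CMA {
  ba :> cba;
  dia : ba -> ba;
  dia_bot : dia bot = bot;
  dia_join : forall x y, dia (join x y) = join (dia x) (dia y)
}.

Definition is_atom {A : cba} (a : A) : Prop :=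
  a <> bot /\ forall x, le x a -> x = bot \/ x = a.

Definition atomic (A : cba) : Prop :=
  forall x : A, x <> bot -> x = sup (fun a => is_atom a /\ le a x).

Definition additive (K : Type) (A : cma) : Prop :=
  forall X : A -> Prop, small K X -> dia A (sup X) = sup (image (dia A) X).

Definition cma_hom {A B : cma} (f : A -> B) : Prop :=
  (forall X : A -> Prop, f (sup X) = sup (image f X)) /\
  (forall X : A -> Prop, f (inf X) = inf (image f X)) /\
  (forall x y, f (join x y) = join (f x) (f y)) /\
  (forall x y, f (meet x y) = meet (f x) (f y)) /\
  f bot = bot /\ f top = top /\
  (forall x, f (compl x) = compl (f x)) /\
  (forall x, f (dia A x) = dia B (f x)).

(* lower adjoint f_*(b) = /\ { x in A | b <= f x } *)
Definition lower {A B : cma} (f : A -> B) (b : B) : A :=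
  inf (fun x : A => le b (f x)).

Record mframe := MFrame {
  wt : Type;
  worlds : wt -> Prop;
  idx : Type;
  rels : idx -> wt -> wt -> Prop
}.

Definition frame_hom (F1 F2 : mframe) (g : wt F1 -> wt F2) : Prop :=
  (forall x, worlds F1 x -> worlds F2 (g x)) /\
  (forall x, worlds F1 x -> forall i2 : idx F2, exists i1 : idx F1,
      forall y, worlds F1 y -> rels F1 i1 x y -> rels F2 i2 (g x) (g y)) /\
  (forall x, worlds F1 x -> forall i1 : idx F1, exists i2 : idx F2,
      forall u, worlds F2 u -> rels F2 i2 (g x) u ->
        exists y, worlds F1 y /\ rels F1 i1 x y /\ g y = u).

Definition relR {A : cma} (X : A -> Prop) (a c : A) : Prop :=
  le a (inf (fun y => exists x, X x /\ le c x /\ y = dia A x)).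

Definition frameF (K : Type) (A : cma) : mframe :=
  @MFrame (car A) (@is_atom A) {X : A -> Prop | small K X}
          (fun X => relR (proj1_sig X)).

(* Main.v *)
Require Import Defs.
From Stdlib Require Import Classical ClassicalEpsilon ProofIrrelevance.

Lemma inf_lb (A:cba) (X:A->Prop) v : X v -> le (inf X) v.
Proof. intros Hv. unfold inf. apply sup_least. intros w Hw. apply Hw, Hv. Qed.
Lemma inf_glb (A:cba) (X:A->Prop) z : (forall v, X v -> le z v) -> le z (inf X).
Proof. intros H. unfold inf. apply sup_ub. exact H. Qed.
Lemma bot_le (A:cba) (x:A) : le bot x.
Proof. unfold bot; apply sup_least; intros _ []. Qed.
Lemma le_top (A:cba) (x:A) : le x top.
Proof. unfold top; apply sup_ub; exact I. Qed.
Lemma le_bot_eq (A:cba) (x:A) : le x bot -> x = bot.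
Proof. intros H; apply le_antisym; auto using bot_le. Qed.
Lemma join_ub_l (A:cba) (x y:A) : le x (join x y).
Proof. unfold join; apply sup_ub; left; reflexivity. Qed.
Lemma join_ub_r (A:cba) (x y:A) : le y (join x y).
Proof. unfold join; apply sup_ub; right; reflexivity. Qed.
Lemma join_least (A:cba) (x y z:A) : le x z -> le y z -> le (join x y) z.
Proof. intros H1 H2; apply sup_least; intros w [->| ->]; auto. Qed.
Lemma meet_lb_l (A:cba) (x y:A) : le (meet x y) x.
Proof. unfold meet; apply inf_lb; left; auto. Qed.
Lemma meet_lb_r (A:cba) (x y:A) : le (meet x y) y.
Proof. unfold meet; apply inf_lb; right; auto. Qed.
Lemma meet_glb (A:cba) (x y z:A) : le z x -> le z y -> le z (meet x y).
Proof. intros H1 H2; apply inf_glb; intros v [->| ->]; auto. Qed.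
Lemma meet_comm (A:cba) (x y:A) : meet x y = meet y x.
Proof. apply le_antisym; apply meet_glb; auto using meet_lb_l, meet_lb_r. Qed.
Lemma distr' (A:cba) (x y z:A) : meet x (join y z) = join (meet x y) (meet x z).
Proof. exact (distr A x y z). Qed.
Lemma cm (A:cba) (x:A) : meet x (compl x) = bot.
Proof. exact (compl_meet A x). Qed.
Lemma cj (A:cba) (x:A) : join x (compl x) = top.
Proof. exact (compl_join A x). Qed.
Lemma meet_top (A:cba) (x:A) : meet x top = x.
Proof. apply le_antisym. apply meet_lb_l. apply meet_glb; auto using le_refl, le_top. Qed.

Lemma le_of_meet_compl (A:cba) (x z:A) : meet x (compl z) = bot -> le x z.
Proof.
  intros H. apply le_trans with (meet x (join z (compl z))).
  rewrite cj, meet_top. apply le_refl.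
  rewrite distr', H. apply join_least; [apply meet_lb_r | apply bot_le].
Qed.
Lemma le_compl_of_meet (A:cba) (x z:A) : meet x z = bot -> le x (compl z).
Proof.
  intros H. apply le_trans with (meet x (join z (compl z))).
  rewrite cj, meet_top. apply le_refl.
  rewrite distr', H. apply join_least; [apply bot_le | apply meet_lb_r].
Qed.
Lemma meet_bot_of_le_compl (A:cba) (x z:A) : le x (compl z) -> meet x z = bot.
Proof.
  intros H. apply le_bot_eq. apply le_trans with (meet z (compl z)); [| rewrite cm; apply le_refl].
  apply meet_glb. apply meet_lb_r. eapply le_trans; [apply meet_lb_l| exact H].
Qed.
Lemma self_compl (A:cba) (x:A) : le x (compl x) -> x = bot.
Proof. intros H. apply le_bot_eq. rewrite <- (cm _ x). apply meet_glb; auto using le_refl. Qed.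

Lemma atom_dich (A:cba) (b z:A) : is_atom b -> le b z \/ le b (compl z).
Proof.
  intros [_ Hb]. destruct (Hb (meet b z) (meet_lb_l _ _ _)) as [H|H].
  right; apply le_compl_of_meet; auto.
  left; rewrite <- H; apply meet_lb_r.
Qed.

Lemma atom_sup (A:cba) (b:A) (Z:A->Prop) : is_atom b -> le b (sup Z) -> exists z, Z z /\ le b z.
Proof.
  intros Hb H. apply NNPP; intro Hn.
  assert (Hz : forall z, Z z -> le z (compl b)).
  { intros z Hz. destruct (atom_dich _ b z Hb) as [H1|H1].
    - exfalso; apply Hn; eauto.
    - apply le_compl_of_meet. rewrite meet_comm. apply meet_bot_of_le_compl; auto. }
  apply (proj1 Hb). apply self_compl. eapply le_trans; [exact H|]. apply sup_least. exact Hz.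
Qed.

Lemma atomic_exists (A:cba) (w:A) : atomic A -> w <> bot -> exists a, is_atom a /\ le a w.
Proof.
  intros HA Hw. apply NNPP; intro Hn. apply Hw. rewrite (HA w Hw). apply le_bot_eq.
  apply sup_least. intros a [Ha Hle]. exfalso; apply Hn; eauto.
Qed.

Lemma sig_eq (T:Type) (P:T->Prop) (a b : {x|P x}) : proj1_sig a = proj1_sig b -> a = b.
Proof. destruct a, b; simpl; intros ->. f_equal; apply proof_irrelevance. Qed.

Lemma small_sub (K T:Type) (X Z : T -> Prop) : small K X -> (forall x, Z x -> X x) -> small K Z.
Proof.
  intros [[g Hg] Hn] HZ.
  set (h := fun p : {x | Z x} => exist X (proj1_sig p) (HZ _ (proj2_sig p))).
  assert (Hh : injective h).
  { intros p q E. apply sig_eq. exact (f_equal (@proj1_sig _ _) E). }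
  split.
  - exists (fun p => g (h p)). intros p q E. apply Hh, Hg, E.
  - intros [k Hk]. apply Hn. exists (fun a => h (k a)). intros a c E. apply Hk, Hh, E.
Qed.

Lemma small_image (K T U:Type) (f:T->U) (X : T -> Prop) : small K X -> small K (image f X).
Proof.
  intros [[g Hg] Hn].
  assert (Hh : exists h : {y | image f X y} -> {x | X x}, forall p, proj1_sig p = f (proj1_sig (h p))).
  { exists (fun p => let H := constructive_indefinite_description _ (proj2_sig p) in
                     exist _ (proj1_sig H) (proj1 (proj2_sig H))).
    intros p. simpl. destruct (constructive_indefinite_description _ _) as [x [Hx Hy]]. exact Hy. }
  destruct Hh as [h Hh].
  assert (Hi : injective h).
  { intros p q E. apply sig_eq. rewrite (Hh p), (Hh q), E. reflexivity. }
  split.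
  - exists (fun p => g (h p)). intros p q E. apply Hi, Hg, E.
  - intros [k Hk]. apply Hn. exists (fun a => h (k a)). intros a c E. apply Hk, Hi, E.
Qed.

Lemma small_single (K T:Type) (x0:T) : regular_cardinal K -> small K (fun x => x = x0).
Proof.
  intros [[n Hn] _]. split.
  - exists (fun _ => n 0). intros p q _. apply sig_eq. rewrite (proj2_sig p), (proj2_sig q). reflexivity.
  - intros [k Hk]. assert (E : k (n 0) = k (n 1)).
    { apply sig_eq. rewrite (proj2_sig (k (n 0))), (proj2_sig (k (n 1))). reflexivity. }
    apply Hk, Hn in E. discriminate.
Qed.

Lemma hom_mono (A B:cma) (f:A->B) : cma_hom f -> forall x y, le x y -> le (f x) (f y).
Proof.
  intros (_ & _ & Hj & _) x y H.
  assert (E : join x y = y) by (apply le_antisym; auto using join_least, le_refl, join_ub_r).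
  pose proof (join_ub_l _ (f x) (f y)) as J. rewrite <- Hj, E in J. exact J.
Qed.

Lemma dia_mono (A:cma) (x y:A) : le x y -> le (dia A x) (dia A y).
Proof.
  intros H.
  assert (E : join x y = y) by (apply le_antisym; auto using join_least, le_refl, join_ub_r).
  pose proof (join_ub_l _ (dia A x) (dia A y)) as J. rewrite <- dia_join, E in J. exact J.
Qed.

Lemma lower_le (A B:cma) (f:A->B) b x : le b (f x) -> le (lower f b) x.
Proof. intros H; unfold lower; apply inf_lb; auto. Qed.

Lemma le_f_lower (A B:cma) (f:A->B) b : cma_hom f -> le b (f (lower f b)).
Proof.
  intros (_ & Hinf & _). unfold lower; rewrite Hinf; apply inf_glb.
  intros v [x [Hx ->]]. exact Hx.
Qed.

Lemma lower_nonbot (A B:cma) (f:A->B) b : cma_hom f -> b <> bot -> lower f b <> bot.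
Proof.
  intros Hf Hb E. apply Hb. apply le_bot_eq. pose proof (le_f_lower _ _ f b Hf) as H.
  rewrite E in H. destruct Hf as (_ & _ & _ & _ & Hbot & _). rewrite Hbot in H. exact H.
Qed.

Lemma lower_atom (A B:cma) (f:A->B) b : cma_hom f -> is_atom b -> is_atom (lower f b).
Proof.
  intros Hf Hb. split. apply lower_nonbot; auto. apply (proj1 Hb).
  intros x Hx. destruct (atom_dich _ b (f x) Hb) as [H|H].
  - right. apply le_antisym; auto. apply lower_le; auto.
  - left. apply self_compl. eapply le_trans; [exact Hx|]. apply lower_le.
    destruct Hf as (_ & _ & _ & _ & _ & _ & Hc & _). rewrite Hc. exact H.
Qed.

Theorem proposition7p5 (K : Type) (A B : cma) (f : A -> B) :
  regular_cardinal K ->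
  additive K A -> atomic A ->
  additive K B -> atomic B ->
  cma_hom f ->
  frame_hom (frameF K B) (frameF K A) (lower f).
Proof.
  intros HK _ _ HaddB HatB Hf.
  pose proof Hf as (Hsup & Hinf & Hjoin & Hmeet & Hbot & Htop & Hcompl & Hdia).
  split; [|split].
  - intros b Hb. exact (lower_atom _ _ f b Hf Hb).
  - intros b Hb [X HX]. exists (exist _ (image f X) (small_image K _ _ f X HX)). simpl.
    intros c Hc Hbc. unfold relR in *. apply inf_glb. intros v [x [HXx [Hcx ->]]].
    apply lower_le. rewrite Hdia. eapply le_trans; [exact Hbc|]. apply inf_lb.
    exists (f x). split; [exists x; split; auto|split; auto].
    eapply le_trans; [apply (le_f_lower _ _ f c Hf)|]. apply (hom_mono _ _ f Hf). exact Hcx.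
  - intros b Hb [Y HY]. simpl.
    set (Y' := fun y => Y y /\ ~ le b (dia B y)).
    set (s := sup Y').
    set (x0 := sup (fun x => le (f x) s)).
    exists (exist _ (fun x => x = x0) (small_single K _ x0 HK)). simpl.
    intros u Hu Hrel. unfold relR in *. destruct (classic (le u x0)) as [Hux|Hux].
    + exfalso.
      assert (Hle : le (lower f b) (dia A x0)).
      { eapply le_trans; [exact Hrel|]. apply inf_lb. exists x0. auto. }
      assert (Hfx0 : le (f x0) s).
      { unfold x0. rewrite Hsup. apply sup_least. intros w [x [Hx ->]]. exact Hx. }
      assert (Hbs : le b (dia B s)).
      { eapply le_trans; [apply (le_f_lower _ _ f b Hf)|].
        eapply le_trans; [apply (hom_mono _ _ f Hf _ _ Hle)|].
        rewrite Hdia. apply dia_mono. exact Hfx0. }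
      unfold s in Hbs. rewrite (HaddB Y') in Hbs.
      2:{ apply (small_sub K _ Y); auto. intros y [Hy _]; exact Hy. }
      destruct (atom_sup _ _ _ Hb Hbs) as [z [[y [Hy' ->]] Hbz]].
      exact (proj2 Hy' Hbz).
    + assert (Hfu : ~ le (f u) s).
      { intro H; apply Hux; unfold x0; apply sup_ub; exact H. }
      assert (Hw : meet (f u) (compl s) <> bot).
      { intro E; apply Hfu; apply le_of_meet_compl; exact E. }
      destruct (atomic_exists _ _ HatB Hw) as [c [Hc Hcw]].
      exists c. split; [exact Hc| split].
      * apply inf_glb. intros v [y [Hy [Hcy ->]]]. apply NNPP; intro Hn.
        apply (proj1 Hc). apply le_bot_eq. rewrite <- (cm _ s). apply meet_glb.
        -- eapply le_trans; [exact Hcy|]. apply sup_ub. split; auto.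
        -- eapply le_trans; [exact Hcw|]. apply meet_lb_r.
      * assert (Hl : le (lower f c) u).
        { apply lower_le. eapply le_trans; [exact Hcw|]. apply meet_lb_l. }
        destruct (proj2 Hu _ Hl) as [E|E]; auto.
        exfalso. exact (lower_nonbot _ _ f c Hf (proj1 Hc) E).
Qed.
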